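(* Let $K_{m_1,m_2}$ be the complete bipartite graph with bipartition $(X,Y)$, $X=\{x_1,\dots,x_{m_1}\}$, $Y=\{y_1,\dots,y_{m_2}\}$, where $2\le m_1\le m_2$. Let $s$ and $i$ be integers with $\max\{1,s-m_2\}\le i\le \min\{m_1,s-1\}$, and let $S_i=\{x_1,\dots,x_i,y_1,\dots,y_{s-i}\}$. If $s\le m_2-m_1+2$, then $\kappa^*_{K_{m_1,m_2}}(S_i)=m_1$.
   Context: For $S\subseteq V(G)$ with $|S|\ge 2$, an $S$-Steiner tree of $G$ is a subtree $T$ of $G$ with $S\subseteq V(T)$ all of whose leaves belong to $S$. A family of $S$-Steiner trees $T_1,\dots,T_k$ is completely independent if for all $1\le p<q\le k$: $E(T_p)\cap E(T_q)=\emptyset$, $V(T_p)\cap V(T_q)=S$, and for any two vertices $x_1,x_2\in S$ the $(x_1,x_2)$-paths in $T_p$ and in $T_q$ are internally disjoint. $\kappa^*_G(S)$ is the maximum number of trees in a completely independent family of $S$-Steiner trees in $G$. *)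

(* Defs.v *)
From mathcomp Require Import all_boot.
Set Implicit Arguments. Unset Strict Implicit. Unset Printing Implicit Defensive.

Section Graphs.
Variables (V : finType) (adj : rel V).

(* A simple graph on V is given by a symmetric irreflexive relation adj.
   A subgraph T = (VT, ET): vertex set VT, edge set ET, edges are 2-sets. *)
Record subgr := Subgr { sg_V : {set V}; sg_E : {set {set V}} }.

Definition is_subgraph (T : subgr) : Prop :=
  forall e, e \in sg_E T ->
    exists u v, [/\ e = [set u; v], adj u v, u \in sg_V T & v \in sg_V T].

Definition tadj (T : subgr) : rel V := fun a b => (a != b) && ([set a; b] \in sg_E T).

(* p is (the vertex list after x of) a path from x to y in T *)
Definition is_tpath (T : subgr) (x y : V) (p : seq V) : bool :=
  [&& x \in sg_V T, path (tadj T) x p, uniq (x :: p) & last x p == y].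

Definition connected_sg (T : subgr) : Prop :=
  forall u v, u \in sg_V T -> v \in sg_V T -> exists p, is_tpath T u v p.

Definition acyclic_sg (T : subgr) : Prop :=
  ~ exists v0 p, [/\ 2 <= size p, v0 \in sg_V T, path (tadj T) v0 p,
                     uniq (v0 :: p) & tadj T (last v0 p) v0].

Definition is_tree (T : subgr) : Prop :=
  [/\ is_subgraph T, sg_V T != set0, connected_sg T & acyclic_sg T].

Definition is_leaf (T : subgr) (v : V) : bool :=
  (v \in sg_V T) && (#|[set e in sg_E T | v \in e]| == 1).

Definition steiner_tree (S : {set V}) (T : subgr) : Prop :=
  [/\ is_tree T, S \subset sg_V T & forall v, is_leaf T v -> v \in S].

Definition internal (x y : V) (p : seq V) : seq V :=
  [seq v <- x :: p | (v != x) && (v != y)].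

Definition completely_independent (S : {set V}) (k : nat) (F : 'I_k -> subgr) : Prop :=
  (forall j, steiner_tree S (F j)) /\
  forall jp jq : 'I_k, jp != jq ->
    [/\ [disjoint sg_E (F jp) & sg_E (F jq)],
        sg_V (F jp) :&: sg_V (F jq) = S &
        forall x1 x2, x1 \in S -> x2 \in S ->
          forall p q, is_tpath (F jp) x1 x2 p -> is_tpath (F jq) x1 x2 q ->
            [disjoint [pred v | v \in internal x1 x2 p]
                    & [pred v | v \in internal x1 x2 q]]].

Definition kappa_star_eq (S : {set V}) (k : nat) : Prop :=
  (exists F : 'I_k -> subgr, completely_independent S F) /\
  forall k' (F : 'I_k' -> subgr), completely_independent S F -> k' <= k.

End Graphs.

(* complete bipartite graph K_{m1,m2}: X = inl 'I_m1, Y = inr 'I_m2 *)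
Definition KV (m1 m2 : nat) : finType := ('I_m1 + 'I_m2)%type.

Definition Kadj (m1 m2 : nat) : rel (KV m1 m2) := fun u v =>
  match u, v with
  | inl _, inr _ | inr _, inl _ => true
  | _, _ => false
  end.

(* S_i = {x_1..x_i, y_1..y_{s-i}} (0-based indices) *)
Definition S_set (m1 m2 s i : nat) : {set KV m1 m2} :=
  [set v : KV m1 m2 | match v with
                       | inl a => a < i
                       | inr b => b < s - i
                       end].
Arguments Kadj : clear implicits.
Arguments S_set : clear implicits.

(* Main.v *)
Require Import Defs.
From mathcomp Require Import all_boot zify.
Set Implicit Arguments. Unset Strict Implicit. Unset Printing Implicit Defensive.

Lemma set2_eq (V : finType) (a b u v : V) : [set a; b] = [set u; v] ->
  (a = u /\ b = v) \/ (a = v /\ b = u).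
Proof.
move=> E.
have ha : a \in [set u; v] by rewrite -E set21.
have hb : b \in [set u; v] by rewrite -E set22.
have hu : u \in [set a; b] by rewrite E set21.
have hv : v \in [set a; b] by rewrite E set22.
move: ha hb hu hv; rewrite !inE.
case/orP=>/eqP Ha; case/orP=>/eqP Hb; subst => //; try by [left|right].
all: move=> X Y; rewrite ?orbb in X Y.
all: try by move/eqP: X => ->; left.
all: try by move/eqP: Y => ->; left.
Qed.

Lemma internal_nb (V : finType) (e : rel V) x p v : path e x p -> uniq (x :: p) ->
  v \in p -> v != last x p -> exists u w, [/\ e u v, e v w & u != w].
Proof.
elim: p x => [//|a p IH] x /= /andP[exa pa] /andP[xnin up] vin vnl.
case: (eqVneq v a) => [va | vna].
- subst v. case: p pa up vnl xnin {IH vin} => [|b p] /=; first by rewrite eqxx.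
  move=> /andP[eab _] _ _ xnin. exists x, b; split=> //.
  apply/eqP => xb; move: xnin; by rewrite xb !inE eqxx orbT.
- have vp : v \in p by move: vin; rewrite inE (negbTE vna).
  exact: IH pa up vp vnl.
Qed.

(* a cycle yields three distinct vertices each having two distinct neighbours *)
Lemma cycle_nb (V : finType) (e : rel V) (B : pred V) :
  (forall u v w, e u v -> e v w -> u != w -> B v) ->
  (forall a b c, B a -> B b -> B c -> a != b -> b != c -> a != c -> False) ->
  forall v0 p, 2 <= size p -> path e v0 p -> uniq (v0 :: p) -> e (last v0 p) v0 -> False.
Proof.
move=> Hb H3 v0 [|a [|b r]] //= _ /andP[e0a /andP[eab pbr]] /andP[].
rewrite inE negb_or => /andP[v0a v0br] /andP[anbr ubr] ecl.
have Bv0 : B v0.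
  apply: (Hb (last b r) v0 a) => //.
  apply/eqP => la; move: anbr; by rewrite -la mem_last.
have Ba : B a by apply: (Hb v0 a b) => //; apply: contraNneq v0br => ->; rewrite inE eqxx.
have Bb : B b.
  case: r pbr ecl anbr ubr {v0br} => [|c r] /=.
    move=> _ ebv _ _; apply: (Hb a b v0) => //; by rewrite eq_sym.
  move=> /andP[ebc _] _ anbr' _; apply: (Hb a b c) => //.
  by apply: contraNneq anbr' => ->; rewrite !inE eqxx !orbT.
apply: (H3 v0 a b) => //.
- by move: anbr; rewrite inE negb_or => /andP[].
- by move: v0br; rewrite inE negb_or => /andP[].
Qed.

Definition rj0 (s i j a b : nat) : bool :=
  ((a == j) && (b < s - i)) || ((2 <= i + j) && (b == s + j - 2) && ((a < i) || (a == j))).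

Definition rj {m1 m2 : nat} (s i j : nat) : rel (KV m1 m2) := fun u v =>
  match u, v with
  | inl a, inr b => rj0 s i j a b
  | inr b, inl a => rj0 s i j a b
  | _, _ => false end.

Definition isw {m1 m2 : nat} (s i j : nat) (v : KV m1 m2) : bool :=
  match v with inr b => (2 <= i + j) && ((b : nat) == s + j - 2) | _ => false end.

Definition isbr {m1 m2 : nat} (s i : nat) (j : 'I_m1) (v : KV m1 m2) : bool :=
  (v == inl j) || isw s i j v.

Definition Tj {m1 : nat} (m2 s i : nat) (j : 'I_m1) : subgr (KV m1 m2) :=
  Subgr [set v | (v \in S_set m1 m2 s i) || isbr s i j v]
        [set e : {set KV m1 m2} | [exists u, exists v, (e == [set u; v]) && rj s i j u v]].


Lemma inl_eqE m1 m2 (a b : 'I_m1) : (inl a == inl b :> KV m1 m2) = ((a : nat) == b).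
Proof. by rewrite (inj_eq (@inl_inj _ _)) -(inj_eq val_inj). Qed.
Lemma inr_eqE m1 m2 (a b : 'I_m2) : (inr a == inr b :> KV m1 m2) = ((a : nat) == b).
Proof. by rewrite (inj_eq (@inr_inj _ _)) -(inj_eq val_inj). Qed.

Lemma rj_sym m1 m2 s i j (u v : KV m1 m2) : rj s i j u v = rj s i j v u.
Proof. by case: u; case: v. Qed.

Lemma tadj_rj m1 m2 s i (j : 'I_m1) (u v : KV m1 m2) : tadj (Tj m2 s i j) u v -> rj s i j u v.
Proof.
rewrite /tadj inE => /andP[_ /existsP[x /existsP[y /andP[/eqP E r]]]].
by case: (set2_eq E) => [[-> ->]|[-> ->]] //; rewrite rj_sym.
Qed.

Lemma rj_tadj m1 m2 s i (j : 'I_m1) (u v : KV m1 m2) : rj s i j u v -> tadj (Tj m2 s i j) u v.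
Proof.
move=> r; rewrite /tadj; apply/andP; split; first by case: u v r => [?|?] [?|?].
rewrite inE; apply/existsP; exists u; apply/existsP; exists v; by rewrite eqxx.
Qed.

Lemma branch m1 m2 s i (j : 'I_m1) (u v w : KV m1 m2) :
  rj s i j u v -> rj s i j v w -> u != w -> isbr s i j v.
Proof.
rewrite /isbr /isw.
case: v => [a|b]; case: u => [a1|b1] //; case: w => [a2|b2] //=;
  rewrite ?inl_eqE ?inr_eqE /rj0; lia.
Qed.

Lemma three_br m1 m2 s i (j : 'I_m1) (a b c : KV m1 m2) :
  isbr s i j a -> isbr s i j b -> isbr s i j c -> a != b -> b != c -> a != c -> False.
Proof.
rewrite /isbr /isw.
case: a => [a|a]; case: b => [b|b]; case: c => [c|c] //=;
  rewrite ?inl_eqE ?inr_eqE; lia.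
Qed.

Lemma br_disj m1 m2 s i (j l : 'I_m1) (v : KV m1 m2) : 1 <= i -> i <= s - 1 ->
  j != l -> isbr s i j v -> isbr s i l v -> False.
Proof.
move=> h1 h2; rewrite -(inj_eq val_inj) /= /isbr /isw.
case: v => [a|b] /=; rewrite ?inl_eqE; lia.
Qed.

Lemma rj_disj m1 m2 s i (j l : 'I_m1) (u v : KV m1 m2) : 1 <= i -> i <= s - 1 ->
  j != l -> rj s i j u v -> rj s i l u v -> False.
Proof.
move=> h1 h2; rewrite -(inj_eq val_inj) /= /rj /rj0.
case: u => [a|b]; case: v => [a'|b'] //=; lia.
Qed.

Lemma internal_br m1 m2 s i (j : 'I_m1) x1 x2 p v :
  is_tpath (Tj m2 s i j) x1 x2 p -> v \in internal x1 x2 p -> isbr s i j v.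
Proof.
case/and4P=> _ pp up /eqP lx.
rewrite /internal mem_filter => /andP[/andP[vx1 vx2]].
rewrite inE (negbTE vx1) /= => vp.
have [u [w [e1 e2 uw]]] := internal_nb pp up vp (ltac:(by rewrite lx)).
exact: (branch (tadj_rj e1) (tadj_rj e2) uw).
Qed.

Lemma acyc m1 m2 s i (j : 'I_m1) : acyclic_sg (Tj m2 s i j).
Proof.
move=> [v0 [p [sz _ pp up cl]]].
apply: (cycle_nb (e := tadj (Tj m2 s i j)) (B := isbr s i j) _ _ sz pp up cl).
- by move=> u v w e1 e2 uw; exact: (branch (@tadj_rj m1 m2 s i j _ _ e1) (@tadj_rj m1 m2 s i j _ _ e2) uw).
- exact: three_br.
Qed.

Lemma rj_inV m1 m2 s i (j : 'I_m1) (u v : KV m1 m2) :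
  rj s i j u v -> (u \in sg_V (Tj m2 s i j)) && (v \in sg_V (Tj m2 s i j)).
Proof.
rewrite /= !inE /isbr /isw /rj /rj0.
case: u => [a|b]; case: v => [a'|b'] //=; rewrite ?inl_eqE; lia.
Qed.

Lemma conn m1 m2 s i (j : 'I_m1) (v : KV m1 m2) :
  2 <= m1 -> m1 <= m2 -> 1 <= i -> i <= s - 1 -> s <= m2 - m1 + 2 ->
  v \in sg_V (Tj m2 s i j) -> connect (tadj (Tj m2 s i j)) (inl j) v.
Proof.
move=> h1 h2 h3 h4 h5.
rewrite /= !inE /isbr /isw.
case: v => [a|b] /= H.
- case: (eqVneq a j) => [->|aj]; first exact: connect0.
  have aj' : (a : nat) != j by rewrite -(inj_eq val_inj) in aj.
  have wlt : s + j - 2 < m2 by have := ltn_ord j; lia.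
  rewrite inl_eqE in H.
  apply: (@connect_trans _ _ (inr (Ordinal wlt))); apply: connect1; apply: rj_tadj;
    rewrite /= /rj0 /=; lia.
- apply: connect1; apply: rj_tadj; rewrite /= /rj0; lia.
Qed.

Lemma not_leaf (V : finType) (T : subgr V) v p q : p != q ->
  [set p; v] \in sg_E T -> [set q; v] \in sg_E T -> ~~ is_leaf T v.
Proof.
move=> pq hp hq; rewrite /is_leaf; apply/negP => /andP[_ /cards1P[e0 H]].
have : [set p; v] \in [set e in sg_E T | v \in e] by rewrite inE hp set22.
have : [set q; v] \in [set e in sg_E T | v \in e] by rewrite inE hq set22.
rewrite H !inE => /eqP E2 /eqP E1.
have := set2_eq (etrans E1 (esym E2)).
by case=> [[pq' _]|[pv vq]]; move: pq; rewrite ?pq' ?pv ?vq eqxx.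
Qed.

Lemma edge_in m1 m2 s i (j : 'I_m1) (u v : KV m1 m2) :
  rj s i j u v -> [set u; v] \in sg_E (Tj m2 s i j).
Proof. by move=> r; rewrite inE; apply/existsP; exists u; apply/existsP; exists v; rewrite eqxx. Qed.

Lemma tadj_sym m1 m2 s i (j : 'I_m1) : symmetric (tadj (Tj m2 s i j)).
Proof. by move=> a b; rewrite /tadj eq_sym setUC. Qed.

Lemma steiner_Tj m1 m2 s i (j : 'I_m1) :
  2 <= m1 -> m1 <= m2 -> 1 <= i -> i <= s - 1 -> s <= m2 - m1 + 2 ->
  steiner_tree (Kadj m1 m2) (S_set m1 m2 s i) (Tj m2 s i j).
Proof.
move=> h1 h2 h3 h4 h5.
split.
- split.
  + move=> e; rewrite inE => /existsP[u /existsP[v /andP[/eqP -> r]]].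
    exists u, v; have /andP[hu hv] := rj_inV r; split=> //.
    by case: u v r {hu hv} => [?|?] [?|?].
  + by apply/set0Pn; exists (inl j); rewrite !inE /isbr eqxx orbT.
  + move=> u v hu hv.
    have cu := conn h1 h2 h3 h4 h5 hu.
    have cv := conn h1 h2 h3 h4 h5 hv.
    rewrite (sym_connect_sym (@tadj_sym _ _ s i j)) in cu.
    have /connectP[p pp lp] := connect_trans cu cv.
    rewrite lp; case: (shortenP pp) => p' pp' up' _.
    by exists p'; rewrite /is_tpath hu pp' up' eqxx.
  + exact: acyc.
- by apply/subsetP => v hv; rewrite inE hv.
- move=> v lv; have vV : v \in sg_V (Tj m2 s i j) by case/andP: lv.
  case vS: (v \in S_set m1 m2 s i) => //; exfalso.
  move: vV lv; rewrite /= inE vS /= /isbr /isw.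
  move: vS; rewrite inE.
  have wlt : s + j - 2 < m2 by have := ltn_ord j; lia.
  have zlt : 0 < m2 by lia.
  case: v => [a|b] /= vS vV; apply/negP.
  + rewrite inl_eqE in vV.
    apply: (@not_leaf _ _ _ (inr (Ordinal zlt)) (inr (Ordinal wlt))).
    * rewrite inr_eqE /=; lia.
    * apply: edge_in; rewrite /= /rj0; lia.
    * apply: edge_in; rewrite /= /rj0; lia.
  + pose k := if (j : nat) == 0 then 1 else 0.
    have kl : k < m1 by rewrite /k; case: ifP; lia.
    apply: (@not_leaf _ _ _ (inl j) (inl (Ordinal kl))).
    * rewrite inl_eqE /= /k; have [j0|j0] := eqVneq (j : nat) 0; rewrite ?j0 ?(negbTE j0) /=; lia.
    * apply: edge_in; rewrite /= /rj0; lia.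
    * apply: edge_in; rewrite /= /rj0 /k; have [j0|j0] := eqVneq (j : nat) 0; rewrite ?j0 ?(negbTE j0) /=; lia.
Qed.

Lemma my_disjointP (T : finType) (A B : {pred T}) :
  (forall x, x \in A -> x \in B -> False) -> [disjoint A & B].
Proof.
move=> H; rewrite disjoint_subset; apply/subsetP => x xA; rewrite inE.
by apply/negP => xB; exact: H x xA xB.
Qed.

Unset Implicit Arguments.
Theorem theorem3p5 (m1 m2 s i : nat) :
  2 <= m1 -> m1 <= m2 ->
  1 <= i -> s - m2 <= i -> i <= m1 -> i <= s - 1 ->
  s <= m2 - m1 + 2 ->
  kappa_star_eq (Kadj m1 m2) (S_set m1 m2 s i) m1.
Proof.
move=> h1 h2 h3 h4 h5 h6 h7; split.
- exists (fun j => Tj m2 s i j); split; first by move=> j; apply: steiner_Tj.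
  move=> jp jq jpq; split.
  + apply: my_disjointP => e; rewrite !inE.
    move=> /existsP[u /existsP[v /andP[/eqP E r1]]] /existsP[u' /existsP[v' /andP[/eqP E' r2]]].
    have r2' : rj s i jq u v.
      by case: (set2_eq (etrans (esym E) E')) => [[-> ->]|[-> ->]] //; rewrite rj_sym.
    exact: (rj_disj h3 h6 jpq r1 r2').
  + apply/setP => v; rewrite in_setI /=.
    move: (S_set m1 m2 s i) => S; rewrite !inE.
    case: (v \in S) => //=; apply/negP => /andP[b1 b2]; exact: (br_disj h3 h6 jpq b1 b2).
  + move=> x1 x2 _ _ p q hp hq; apply: my_disjointP => v; rewrite !inE.
    move=> /(internal_br hp) b1 /(internal_br hq) b2; exact: (br_disj h3 h6 jpq b1 b2).
- move=> k F [st ind].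
  have zlt1 : 0 < m1 by lia.
  have zlt2 : 0 < m2 by lia.
  pose x0 : KV m1 m2 := inl (Ordinal zlt1).
  pose y0 : KV m1 m2 := inr (Ordinal zlt2).
  have x0S : x0 \in S_set m1 m2 s i by rewrite inE /=; lia.
  have y0S : y0 \in S_set m1 m2 s i by rewrite inE /=; lia.
  have nb : forall j, exists c : 'I_m1, [set y0; inl c] \in sg_E (F j).
    move=> j; case: (st j) => [[sub _ con _] sS _].
    have [p /and4P[_ pp _ /eqP lp]] := con y0 x0 (subsetP sS _ y0S) (subsetP sS _ x0S).
    case: p pp lp => [|a p] /=; first by move=> _ E; move: E; rewrite /x0 /y0.
    move=> /andP[/andP[_ ea] _] _; have [u [v [E auv _ _]]] := sub _ ea.
    case: a E ea => [c|b] E ea; first by exists c.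
    by case: (set2_eq E) auv => [[<- <-]|[<- <-]].
  pose f j := odflt (Ordinal zlt1) [pick c | [set y0; inl c] \in sg_E (F j)].
  have fP : forall j, [set y0; inl (f j)] \in sg_E (F j).
    move=> j; rewrite /f; case: pickP => [c //|H].
    by have [c hc] := nb j; rewrite H in hc.
  have inj : injective f.
    move=> j1 j2 e; case: (eqVneq j1 j2) => // ne.
    have [dis _ _] := ind j1 j2 ne.
    have g1 := fP j1; have g2 := fP j2; rewrite -e in g2.
    by rewrite (disjointFr dis g1) in g2.
  by have := leq_card f inj; rewrite !card_ord.
Qed.
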